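(* Let $\mathcal{C}$ be a category, let $\mathcal{D}$ be a full pro-reflective subcategory of $\mathcal{C}$, and let $J$ be a directed partially ordered set. Let $X,Y\in Ob\,\mathcal{C}$, let $\boldsymbol{q}=(q_\mu):Y\to\boldsymbol{Y}=(Y_\mu,q_{\mu\mu'},M)$ be a $\mathcal{D}$-expansion of $Y$, and let $(H_\mu)_{\mu\in M}$ be a family of $J$-shape morphisms $H_\mu:X\to Y_\mu$ with $S^J(q_{\mu\mu'})H_{\mu'}=H_\mu$ for all $\mu\le\mu'$. Then there exists a unique morphism $F:X\to Y$ of $Sh^J_{(\mathcal{C},\mathcal{D})}$ such that $H_\mu=S^J(q_\mu)F$ for every $\mu\in M$.
   Context: An inverse system $\boldsymbol{X}=(X_\lambda,p_{\lambda\lambda'},\Lambda)$ in a category $\mathcal{C}$: $\Lambda$ a directed preordered set, objects $X_\lambda$, morphisms $p_{\lambda\lambda'}:X_{\lambda'}\to X_\lambda$ ($\lambda\le\lambda'$) with $p_{\lambda\lambda}=1$, $p_{\lambda\lambda'}p_{\lambda'\lambda''}=p_{\lambda\lambda''}$. For a directed partially ordered set $J$ and inverse systems $\boldsymbol{X}$, $\boldsymbol{Y}=(Y_\mu,q_{\mu\mu'},M)$, a $J$-morphism $(f,f^j_\mu):\boldsymbol{X}\to\boldsymbol{Y}$ consists of a function $f:M\to\Lambda$ and $\mathcal{C}$-morphisms $f^j_\mu:X_{f(\mu)}\to Y_\mu$ ($\mu\in M$, $j\in J$) such that for all $\mu\le\mu'$ there exist $\lambda\ge f(\mu),f(\mu')$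 and $j_0\in J$ with $f^{j'}_\mu p_{f(\mu)\lambda}=q_{\mu\mu'}f^{j'}_{\mu'}p_{f(\mu')\lambda}$ for all $j'\ge j_0$. Composition: $(g,g^j_\nu)(f,f^j_\mu)=(fg,g^j_\nu f^j_{g(\nu)})$; identity $(1_\Lambda,1_{X_\lambda})$. Two $J$-morphisms are equivalent if for every $\mu$ there exist $\lambda\ge f(\mu),f'(\mu)$ and $j_0$ with $f^{j'}_\mu p_{f(\mu)\lambda}=f'^{j'}_\mu p_{f'(\mu)\lambda}$ for all $j'\ge j_0$; $pro^J$-$\mathcal{C}$ is the resulting quotient category. For $J=\{1\}$ this is $pro$-$\mathcal{C}$; $\underline{I}:pro$-$\mathcal{C}\to pro^J$-$\mathcal{C}$ sends $[(f,f_\mu)]$ to $[(f,f^j_\mu=f_\mu)]$. For a full subcategory $\mathcal{D}\subseteq\mathcal{C}$ and $X\in Ob\,\mathcal{C}$, a $\mathcal{D}$-expansion of $X$ is a family $\boldsymbol{p}=(p_\lambda:X\to X_\lambda)$ into an inverse system $\boldsymbol{X}$ in $\mathcal{D}$ with $p_{\lambda\lambda'}p_{\lambda'}=p_\lambda$ such that (E1) every $\mathcal{C}$-morphism $h:X\to P$, $P\in Ob\,\mathcal{D}$, factors as $gp_\lambda$, and (E2) $gp_\lambda=g'p_\lambda$ implies $gp_{\lambda\lambda'}=g'p_{\lambda\lambda'}$ for some $\lambda'\ge\lambda$. $\mathcal{D}$ is pro-reflective if every object has a $\mathcal{D}$-expansion. The $J$-shape category $Sh^J_{(\mathcal{C},\mathcal{D})}$: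 objects of $\mathcal{C}$; with chosen $\mathcal{D}$-expansions $\boldsymbol{p}:X\to\boldsymbol{X}$, $\boldsymbol{q}:Y\to\boldsymbol{Y}$, morphisms $X\to Y$ are morphisms $\boldsymbol{X}\to\boldsymbol{Y}$ of $pro^J$-$\mathcal{D}$, identified across different choices of expansions via $\underline{I}$ of the canonical $pro$-$\mathcal{D}$ isomorphisms between expansions; composition of representatives. $S^J:\mathcal{C}\to Sh^J_{(\mathcal{C},\mathcal{D})}$ is the identity on objects and sends $g:X\to Y$ to the class of $\underline{I}(\boldsymbol{g})$, where $\boldsymbol{g}$ is the unique $pro$-$\mathcal{D}$ morphism with $\boldsymbol{gp}=\boldsymbol{q}g$. *)

(* Defs.v *)
From Stdlib Require Import ClassicalEpsilon.

Record Category := {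
  Ob :> Type;
  Hom : Ob -> Ob -> Type;
  comp : forall a b c : Ob, Hom b c -> Hom a b -> Hom a c;
  idm : forall a : Ob, Hom a a;
  comp_assoc : forall a b c d (f : Hom a b) (g : Hom b c) (h : Hom c d),
      comp a c d h (comp a b c g f) = comp a b d (comp b c d h g) f;
  comp_id_l : forall a b (f : Hom a b), comp a b b (idm b) f = f;
  comp_id_r : forall a b (f : Hom a b), comp a a b f (idm a) = f
}.
Arguments Hom {c} _ _ : rename.
Arguments comp {c a b c0} _ _ : rename.
Arguments idm {c} _ : rename.

(** A full subcategory D of C is given by a predicate [inD] on objects
    (hom-sets of D are those of C). *)

Definition directed_preorder {I : Type} (le : I -> I -> Prop) : Prop :=
  (forall i, le i i) /\
  (forall i j k, le i j -> le j k -> le i k) /\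
  (forall i j, exists k, le i k /\ le j k).

Definition directed_poset {J : Type} (le : J -> J -> Prop) : Prop :=
  directed_preorder le /\
  (forall i j, le i j -> le j i -> i = j) /\
  inhabited J.

Record isys (C : Category) := {
  idx : Type;
  ile : idx -> idx -> Prop;
  ile_dir : directed_preorder ile;
  iobj : idx -> Ob C;
  bond : forall l l' : idx, ile l l' -> Hom (iobj l') (iobj l);
  bond_id : forall l (h : ile l l), bond l l h = idm (iobj l);
  bond_comp : forall l l' l'' (h1 : ile l l') (h2 : ile l' l'') (h3 : ile l l''),
      comp (bond l l' h1) (bond l' l'' h2) = bond l l'' h3
}.
Arguments idx {C} _.
Arguments ile {C} _ _ _.
Arguments iobj {C} _ _.
Arguments bond {C} _ {l l'} _.

Record Jraw {C : Category} (J : Type) (X Y : isys C) := {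
  jf : idx Y -> idx X;
  jm : forall mu : idx Y, J -> Hom (iobj X (jf mu)) (iobj Y mu)
}.
Arguments jf {C J X Y} _ _.
Arguments jm {C J X Y} _ _ _.

Definition is_Jmor {C : Category} {J : Type} (Jle : J -> J -> Prop)
    {X Y : isys C} (F : Jraw J X Y) : Prop :=
  forall (mu mu' : idx Y) (h : ile Y mu mu'),
    exists (lam : idx X) (h1 : ile X (jf F mu) lam) (h2 : ile X (jf F mu') lam)
           (j0 : J),
      forall j', Jle j0 j' ->
        comp (jm F mu j') (bond X h1) =
        comp (bond Y h) (comp (jm F mu' j') (bond X h2)).

Definition Jequiv {C : Category} {J : Type} (Jle : J -> J -> Prop)
    {X Y : isys C} (F G : Jraw J X Y) : Prop :=
  forall mu : idx Y,
    exists (lam : idx X) (h1 : ile X (jf F mu) lam) (h2 : ile X (jf G mu) lam)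
           (j0 : J),
      forall j', Jle j0 j' ->
        comp (jm F mu j') (bond X h1) = comp (jm G mu j') (bond X h2).

Definition Jcomp {C : Category} {J : Type} {X Y Z : isys C}
    (G : Jraw J Y Z) (F : Jraw J X Y) : Jraw J X Z :=
  {| jf := fun nu => jf F (jf G nu);
     jm := fun nu j => comp (jm G nu j) (jm F (jf G nu) j) |}.

Record expansion (C : Category) (inD : Ob C -> Prop) (X : Ob C) := {
  esys : isys C;
  esys_D : forall l, inD (iobj esys l);
  emap : forall l, Hom X (iobj esys l);
  emap_comm : forall l l' (h : ile esys l l'), comp (bond esys h) (emap l') = emap l;
  exp_E1 : forall (P : Ob C) (h : Hom X P), inD P ->
      exists s : {l : idx esys & Hom (iobj esys l) P},
        h = comp (projT2 s) (emap (projT1 s));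
  exp_E2 : forall (l : idx esys) (P : Ob C) (g g' : Hom (iobj esys l) P), inD P ->
      comp g (emap l) = comp g' (emap l) ->
      exists (l' : idx esys) (h : ile esys l l'),
        comp g (bond esys h) = comp g' (bond esys h)
}.
Arguments esys {C inD X} _.
Arguments esys_D {C inD X} _ _.
Arguments emap {C inD X} _ _.

(** * The J-shape category Sh^J_(C,D), built from a choice [E] of a
    D-expansion for every object (such a choice exists iff D is
    pro-reflective).  A morphism X -> Y is a J-morphism
    esys (E X) -> esys (E Y); equality of shape morphisms is [Jequiv]. *)
Definition ShHom {C : Category} {inD : Ob C -> Prop} {J : Type}
    (Jle : J -> J -> Prop) (E : forall X : Ob C, expansion C inD X) (X Y : Ob C) :=
  { F : Jraw J (esys (E X)) (esys (E Y)) | is_Jmor Jle F }.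

(** S^J(g): the class of I(g), where g : X -> Y is represented by a
    family (f, g_mu) with g_mu p_{f(mu)} = q_mu g (given by (E1)). *)
Definition SJ_choice {C : Category} {inD : Ob C -> Prop}
    (E : forall X : Ob C, expansion C inD X) {X Y : Ob C} (g : Hom X Y)
    (mu : idx (esys (E Y))) :
    {l : idx (esys (E X)) & Hom (iobj (esys (E X)) l) (iobj (esys (E Y)) mu)} :=
  proj1_sig (constructive_indefinite_description _
    (exp_E1 _ _ _ (E X) _ (comp (emap (E Y) mu) g) (esys_D (E Y) mu))).

Definition SJ {C : Category} {inD : Ob C -> Prop} {J : Type}
    (E : forall X : Ob C, expansion C inD X) {X Y : Ob C} (g : Hom X Y) :
    Jraw J (esys (E X)) (esys (E Y)) :=
  {| jf := fun mu => projT1 (SJ_choice E g mu);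
     jm := fun mu _ => projT2 (SJ_choice E g mu) |}.

(* Main.v *)
Require Import Defs.
From Stdlib Require Import ClassicalEpsilon.

Definition cone {C : Category} (J : Type) (P : isys C) (W : Ob C) :=
  { l : idx P & J -> Hom (iobj P l) W }.

Definition ceq {C : Category} {J : Type} (Jle : J -> J -> Prop) {P : isys C} {W : Ob C}
  (a b : cone J P W) : Prop :=
  exists lam (h1 : ile P (projT1 a) lam) (h2 : ile P (projT1 b) lam) (j0 : J),
    forall j, Jle j0 j -> comp (projT2 a j) (bond P h1) = comp (projT2 b j) (bond P h2).

Definition cpost {C : Category} {J : Type} {P : isys C} {W W' : Ob C}
  (w : Hom W W') (a : cone J P W) : cone J P W' :=
  existT _ (projT1 a) (fun j => comp w (projT2 a j)).

Lemma bond_irr {C : Category} (P : isys C) l l' (h h' : ile P l l') : bond P h = bond P h'.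
Proof.
  destruct (ile_dir C P) as [Hr _].
  rewrite <- (bond_comp C P l l' l' h (Hr l') h'). rewrite bond_id. symmetry. apply comp_id_r.
Qed.

Lemma ceq_refl {C : Category} {J} Jle (hJ : directed_poset Jle) (P : isys C) W (a : cone J P W) :
  ceq Jle a a.
Proof.
  destruct (ile_dir C P) as [Hr _]. destruct hJ as [_ [_ [j0]]].
  exists (projT1 a), (Hr _), (Hr _), j0. reflexivity.
Qed.

Lemma ceq_sym {C : Category} {J} Jle (P : isys C) W (a b : cone J P W) :
  ceq Jle a b -> ceq Jle b a.
Proof.
  intros (lam & h1 & h2 & j0 & Hj). exists lam, h2, h1, j0. intros j hj. symmetry. auto.
Qed.

Lemma ceq_trans {C : Category} {J} Jle (hJ : directed_poset Jle) (P : isys C) W (a b c : cone J P W) :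
  ceq Jle a b -> ceq Jle b c -> ceq Jle a c.
Proof.
  intros (l1 & h1 & h2 & j1 & H1) (l2 & g1 & g2 & j2 & H2).
  destruct (ile_dir C P) as [Hr [Ht Hd]].
  destruct hJ as [[_ [Jt Jd]] _].
  destruct (Hd l1 l2) as [l [k1 k2]]. destruct (Jd j1 j2) as [j0 [i1 i2]].
  exists l, (Ht _ _ _ h1 k1), (Ht _ _ _ g2 k2), j0. intros j hj.
  rewrite <- (bond_comp C P _ _ _ h1 k1 (Ht _ _ _ h1 k1)), <- (bond_comp C P _ _ _ g2 k2 (Ht _ _ _ g2 k2)).
  rewrite !comp_assoc. rewrite (H1 j (Jt _ _ _ i1 hj)).
  rewrite <- (H2 j (Jt _ _ _ i2 hj)).
  rewrite <- !comp_assoc.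
  rewrite (bond_comp C P _ _ _ h2 k1 (Ht _ _ _ h2 k1)), (bond_comp C P _ _ _ g1 k2 (Ht _ _ _ g1 k2)).
  f_equal. apply bond_irr.
Qed.

Lemma ceq_post {C : Category} {J} Jle (P : isys C) W W' (w : Hom W W') (a b : cone J P W) :
  ceq Jle a b -> ceq Jle (cpost w a) (cpost w b).
Proof.
  intros (l & h1 & h2 & j0 & H). exists l, h1, h2, j0. intros j hj; simpl.
  rewrite <- !comp_assoc. f_equal. auto.
Qed.

Lemma ceq_postcomp {C : Category} {J} Jle (hJ : directed_poset Jle) (P : isys C) W W' W''
  (w : Hom W W') (w' : Hom W' W'') (a : cone J P W) :
  ceq Jle (cpost w' (cpost w a)) (cpost (comp w' w) a).
Proof.
  destruct (ile_dir C P) as [Hr _]. destruct hJ as [_ [_ [j0]]].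
  exists (projT1 a), (Hr _), (Hr _), j0. intros j _; simpl. rewrite comp_assoc. reflexivity.
Qed.

Lemma ceq_postid {C : Category} {J} Jle (hJ : directed_poset Jle) (P : isys C) W
  (a : cone J P W) : ceq Jle (cpost (idm W) a) a.
Proof.
  destruct (ile_dir C P) as [Hr _]. destruct hJ as [_ [_ [j0]]].
  exists (projT1 a), (Hr _), (Hr _), j0. intros j _; simpl. rewrite comp_id_l. reflexivity.
Qed.

Definition Gc {C : Category} {J} {P Q : isys C} (G : Jraw J P Q) (k : idx Q) :
  cone J P (iobj Q k) := existT _ (jf G k) (jm G k).

Lemma Jmor_cone {C : Category} {J} Jle {P Q : isys C} (G : Jraw J P Q) :
  is_Jmor Jle G -> forall k k' (h : ile Q k k'), ceq Jle (Gc G k) (cpost (bond Q h) (Gc G k')).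
Proof.
  intros HG k k' h. destruct (HG k k' h) as (l & h1 & h2 & j0 & H).
  exists l, h1, h2, j0. intros j hj; simpl. simpl in H. rewrite H by auto. apply comp_assoc.
Qed.

Lemma cone_Jmor {C : Category} {J} Jle {P Q : isys C} (G : Jraw J P Q) :
  (forall k k' (h : ile Q k k'), ceq Jle (Gc G k) (cpost (bond Q h) (Gc G k'))) -> is_Jmor Jle G.
Proof.
  intros HG k k' h. destruct (HG k k' h) as (l & h1 & h2 & j0 & H).
  exists l, h1, h2, j0. intros j hj. specialize (H j hj). simpl in H. rewrite H. symmetry. apply comp_assoc.
Qed.

Lemma L1 {C : Category} {inD : Ob C -> Prop} {J} Jle (hJ : directed_poset Jle) (P : isys C)
  {B : Ob C} (e : expansion C inD B) (G : Jraw J P (esys e)) (HG : is_Jmor Jle G)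
  (W : Ob C) (hW : inD W) k k' (a : Hom (iobj (esys e) k) W) (b : Hom (iobj (esys e) k') W) :
  comp a (emap e k) = comp b (emap e k') ->
  ceq Jle (cpost a (Gc G k)) (cpost b (Gc G k')).
Proof.
  intros Hab.
  destruct (ile_dir C (esys e)) as [Hr [Ht Hd]].
  destruct (Hd k k') as [k2 [i1 i2]].
  assert (E2 : comp (comp a (bond _ i1)) (emap e k2) = comp (comp b (bond _ i2)) (emap e k2)).
  { rewrite <- !comp_assoc, !emap_comm. exact Hab. }
  destruct (exp_E2 _ _ _ e k2 W _ _ hW E2) as (k3 & i3 & E3).
  rewrite <- !comp_assoc in E3. rewrite (bond_comp C _ _ _ _ i1 i3 (Ht _ _ _ i1 i3)), (bond_comp C _ _ _ _ i2 i3 (Ht _ _ _ i2 i3)) in E3.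
  eapply ceq_trans; [exact hJ| |].
  { apply ceq_post. apply (Jmor_cone Jle G HG k k3 (Ht _ _ _ i1 i3)). }
  eapply ceq_trans; [exact hJ| apply ceq_postcomp; exact hJ |].
  rewrite E3.
  eapply ceq_trans; [exact hJ| apply ceq_sym, ceq_postcomp; exact hJ |].
  apply ceq_post. apply ceq_sym. apply (Jmor_cone Jle G HG).
Qed.

Lemma SJ_choice_spec {C : Category} {inD : Ob C -> Prop}
    (E : forall X : Ob C, expansion C inD X) {X Y : Ob C} (g : Hom X Y) mu :
  comp (emap (E Y) mu) g = comp (projT2 (SJ_choice E g mu)) (emap (E X) (projT1 (SJ_choice E g mu))).
Proof.
  unfold SJ_choice. destruct (constructive_indefinite_description _ _) as [s Hs]. exact Hs.
Qed.

Theorem lemma9 (C : Category) (inD : Ob C -> Prop)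
    (J : Type) (Jle : J -> J -> Prop) (hJ : directed_poset Jle)
    (E : forall X : Ob C, expansion C inD X)
    (X Y : Ob C) (q : expansion C inD Y)
    (H : forall mu : idx (esys q), ShHom Jle E X (iobj (esys q) mu))
    (hH : forall (mu mu' : idx (esys q)) (h : ile (esys q) mu mu'),
        Jequiv Jle (Jcomp (SJ E (bond (esys q) h)) (proj1_sig (H mu')))
                   (proj1_sig (H mu))) :
  exists F : ShHom Jle E X Y,
    (forall mu : idx (esys q),
        Jequiv Jle (proj1_sig (H mu)) (Jcomp (SJ E (emap q mu)) (proj1_sig F))) /\
    (forall F' : ShHom Jle E X Y,
        (forall mu : idx (esys q),
            Jequiv Jle (proj1_sig (H mu)) (Jcomp (SJ E (emap q mu)) (proj1_sig F'))) ->
        Jequiv Jle (proj1_sig F) (proj1_sig F')).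
Proof.
  pose (P := esys (E X)).
  assert (Hr : forall mu, {s : {k : idx (esys (E (iobj (esys q) mu))) &
        Hom (iobj (esys (E (iobj (esys q) mu))) k) (iobj (esys q) mu)} |
        idm _ = comp (projT2 s) (emap _ (projT1 s))}).
  { intro mu. apply constructive_indefinite_description. apply exp_E1. apply esys_D. }
  assert (Ex : exists (kap : forall mu, idx (esys (E (iobj (esys q) mu)))) (r : forall mu, Hom (iobj (esys (E (iobj (esys q) mu))) (kap mu)) (iobj (esys q) mu)), forall mu, idm _ = comp (r mu) (emap _ (kap mu))).
  { exists (fun mu => projT1 (proj1_sig (Hr mu))), (fun mu => projT2 (proj1_sig (Hr mu))). intro mu. exact (proj2_sig (Hr mu)). }
  destruct Ex as [kap [r Hrs]].
  clear Hr.
  pose (R := fun mu => cpost (r mu) (Gc (proj1_sig (H mu)) (kap mu)) : cone J P (iobj (esys q) mu)).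
  assert (HJm : forall mu, is_Jmor Jle (proj1_sig (H mu))) by (intro mu; exact (proj2_sig (H mu))).
  destruct (ile_dir C (esys q)) as [qr [qt qd]].
  assert (Cen : forall mu mu' (h : ile (esys q) mu mu'), ceq Jle (R mu) (cpost (bond (esys q) h) (R mu'))).
  { intros mu mu' h.
    pose proof (hH mu mu' h (kap mu)) as K. change (ceq Jle
       (cpost (projT2 (SJ_choice E (bond (esys q) h) (kap mu)))
          (Gc (proj1_sig (H mu')) (projT1 (SJ_choice E (bond (esys q) h) (kap mu)))))
       (Gc (proj1_sig (H mu)) (kap mu))) in K.
    pose proof (SJ_choice_spec E (bond (esys q) h) (kap mu)) as Ks.
    set (sg := SJ_choice E (bond (esys q) h) (kap mu)) in *.
    unfold R.
    eapply ceq_trans; [exact hJ| apply ceq_post, ceq_sym, K |].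
    eapply ceq_trans; [exact hJ| apply ceq_postcomp; exact hJ |].
    eapply ceq_trans; [exact hJ| | apply ceq_sym, ceq_postcomp; exact hJ ].
    apply (L1 Jle hJ P _ _ (HJm mu') _ (esys_D q mu)).
    rewrite <- comp_assoc, <- Ks, comp_assoc, <- Hrs, comp_id_l.
    rewrite <- comp_assoc, <- Hrs, comp_id_r. reflexivity. }
  assert (Chain : forall mu mu' (h : ile (esys q) mu mu') W (u : Hom (iobj (esys q) mu) W),
     ceq Jle (cpost u (R mu)) (cpost (comp u (bond (esys q) h)) (R mu'))).
  { intros mu mu' h W u.
    eapply ceq_trans; [exact hJ| apply ceq_post, Cen |]. apply ceq_postcomp; exact hJ. }
  assert (Phi : forall W (hW : inD W) mu u mu' u', comp u (emap q mu) = comp u' (emap q mu') ->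
      ceq Jle (cpost u (R mu)) (cpost u' (R mu') : cone J P W)).
  { intros W hW mu u mu' u' Huu.
    destruct (qd mu mu') as [m2 [i1 i2]].
    assert (E2 : comp (comp u (bond _ i1)) (emap q m2) = comp (comp u' (bond _ i2)) (emap q m2)).
    { rewrite <- !comp_assoc, !emap_comm. exact Huu. }
    destruct (exp_E2 _ _ _ q m2 W _ _ hW E2) as (m3 & i3 & E3).
    eapply ceq_trans; [exact hJ| apply (Chain _ _ i1) |].
    eapply ceq_trans; [exact hJ| apply (Chain _ _ i3) |].
    rewrite E3.
    eapply ceq_trans; [exact hJ| apply ceq_sym, (Chain _ _ i3) |].
    apply ceq_sym, Chain. }
  assert (Hq : forall nu, {s : {mu : idx (esys q) & Hom (iobj (esys q) mu) (iobj (esys (E Y)) nu)} |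
        emap (E Y) nu = comp (projT2 s) (emap q (projT1 s))}).
  { intro nu. apply constructive_indefinite_description. apply exp_E1. apply esys_D. }
  assert (Ex : exists (m : idx (esys (E Y)) -> idx (esys q)) (u : forall nu, Hom (iobj (esys q) (m nu)) (iobj (esys (E Y)) nu)), forall nu, emap (E Y) nu = comp (u nu) (emap q (m nu))).
  { exists (fun nu => projT1 (proj1_sig (Hq nu))), (fun nu => projT2 (proj1_sig (Hq nu))). intro nu. exact (proj2_sig (Hq nu)). }
  destruct Ex as [m [u Hus]].
  clear Hq.
  pose (Fc := fun nu => cpost (u nu) (R (m nu))).
  pose (Fr := {| jf := fun nu => projT1 (Fc nu); jm := fun nu => projT2 (Fc nu) |}
          : Jraw J (esys (E X)) (esys (E Y))).
  assert (FJ : is_Jmor Jle Fr).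
  { apply cone_Jmor. intros k k' h. change (ceq Jle (Fc k) (cpost (bond _ h) (Fc k'))).
    unfold Fc.
    eapply ceq_trans; [exact hJ| | apply ceq_sym, ceq_postcomp; exact hJ ].
    apply Phi. apply esys_D.
    rewrite <- Hus, <- comp_assoc, <- Hus. symmetry. apply emap_comm. }
  exists (exist _ Fr FJ). split.
  - intros mu k. simpl.
    change (ceq Jle (Gc (proj1_sig (H mu)) k)
       (cpost (projT2 (SJ_choice E (emap q mu) k))
          (Fc (projT1 (SJ_choice E (emap q mu) k))))).
    pose proof (SJ_choice_spec E (emap q mu) k) as Ks.
    set (sg := SJ_choice E (emap q mu) k) in *.
    unfold Fc.
    eapply ceq_trans; [exact hJ| | apply ceq_sym, ceq_postcomp; exact hJ ].
    eapply ceq_trans; [exact hJ| | apply (Phi _ (esys_D _ _) mu (emap _ k)) ].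
    2:{ rewrite <- comp_assoc, <- Hus. exact Ks. }
    unfold R.
    eapply ceq_trans; [exact hJ| | apply ceq_sym, ceq_postcomp; exact hJ ].
    eapply ceq_trans; [exact hJ| apply ceq_sym, ceq_postid; exact hJ |].
    apply (L1 Jle hJ P _ _ (HJm mu) _ (esys_D _ _)).
    rewrite <- comp_assoc, <- Hrs, comp_id_l, comp_id_r. reflexivity.
  - intros [F' HF'] HF mu'. simpl.
    change (ceq Jle (Fc mu') (Gc F' mu')).
    unfold Fc, R.
    pose proof (HF (m mu') (kap (m mu'))) as K.
    change (ceq Jle (Gc (proj1_sig (H (m mu'))) (kap (m mu')))
       (cpost (projT2 (SJ_choice E (emap q (m mu')) (kap (m mu'))))
          (Gc F' (projT1 (SJ_choice E (emap q (m mu')) (kap (m mu'))))))) in K.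
    pose proof (SJ_choice_spec E (emap q (m mu')) (kap (m mu'))) as Ks.
    set (sg := SJ_choice E (emap q (m mu')) (kap (m mu'))) in *.
    eapply ceq_trans; [exact hJ| apply ceq_post, ceq_post, K |].
    eapply ceq_trans; [exact hJ| apply ceq_post, ceq_postcomp; exact hJ |].
    eapply ceq_trans; [exact hJ| apply ceq_postcomp; exact hJ |].
    eapply ceq_trans; [exact hJ| | apply ceq_postid; exact hJ ].
    apply (L1 Jle hJ P _ _ HF' _ (esys_D _ _)).
    rewrite comp_id_l, <- !comp_assoc, <- Ks, (comp_assoc _ _ _ _ _ (emap q _) (emap _ _) (r _)), <- Hrs, comp_id_l.
    symmetry. apply Hus.
Qed.
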